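(* Let $a<0$, $b<0$, $c>0$, $d<0$ with $a+bd>0$, consider $$Z_0=\begin{cases}X=(a,0,b(y+x^2)) & z\ge0,\\ Y=(c,d,x)& z\le0,\end{cases}$$ and let $\Sigma^{c+}=\{(x,y,0)\,:\,b(y+x^2)>0,\ x>0\}=\{(x,y,0)\,:\,x>0,\ y<-x^2\}$. Let $\varphi$ be the first return map $$\varphi(x,y)=\left(\frac{ax-\sqrt{-3a^2(x^2+4y)}}{2a},\ y+\frac{d\big(ax-\sqrt{-3a^2(x^2+4y)}\big)}{ac}\right).$$ Then $$\varphi(\Sigma^{c+})\subset\Big\{(x,y,0)\in\Sigma\,:\,-\tfrac{x^2}{3}+2\tfrac{d}{c}x<y<-\tfrac{x^2}{4}+2\tfrac{d}{c}x,\ x>0\Big\}.$$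
   Context: $\Sigma=\{z=0\}$, points identified with $(x,y)$ or $(x,y,0)$. The first return map $\varphi$ sends a point $p$ of $\Sigma$ to the point obtained by following the trajectory of $X$ from $p$ until it returns to $\Sigma$, and then following the trajectory of $Y$ from there until it returns to $\Sigma$; the displayed formula is its explicit expression. *)

(* Defs.v *)
From Stdlib Require Import Reals Lra.
Open Scope R_scope.

(* Points of Sigma = {z = 0} are identified with pairs (x, y). *)

Definition Sigma_cplus (b : R) (p : R * R) : Prop :=
  b * (snd p + (fst p)^2) > 0 /\ fst p > 0.

Definition phi (a c d : R) (p : R * R) : R * R :=
  let x := fst p in let y := snd p in
  let w := a * x - sqrt (- 3 * a^2 * (x^2 + 4 * y)) in
  (w / (2 * a), y + d * w / (a * c)).

Definition target_region (c d : R) (q : R * R) : Prop :=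
  - (fst q)^2 / 3 + 2 * (d / c) * fst q < snd q /\
  snd q < - (fst q)^2 / 4 + 2 * (d / c) * fst q /\
  fst q > 0.

(* Main.v *)
Require Import Defs.
From Stdlib Require Import Reals Lra.
Open Scope R_scope.

Theorem mainTheorem5 (a b c d : R)
  (ha : a < 0) (hb : b < 0) (hc : c > 0) (hd : d < 0) (habd : a + b * d > 0) :
  forall p : R * R, Sigma_cplus b p -> target_region c d (phi a c d p).
Proof.
  intros [x y] [H1 H2]; unfold target_region, phi; cbn [fst snd] in *.
  assert (Hy : y + x^2 < 0).
  { destruct (Rle_or_lt 0 (y + x^2)) as [h|h]; [|exact h].
    assert (b * (y + x^2) <= 0) by nra. lra. }
  set (u := -3 * (x^2 + 4*y)).
  assert (Hu : 0 <= u) by (unfold u; nra).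
  set (t := sqrt u).
  assert (Ht0 : 0 <= t) by apply sqrt_pos.
  assert (Htt : t * t = u) by (apply sqrt_sqrt; exact Hu).
  assert (Ht3 : t > 3 * x).
  { assert (t*t > 9*x*x) by (unfold u in Htt; nra). nra. }
  assert (Hs : sqrt (-3 * a^2 * (x^2 + 4*y)) = - a * t).
  { apply sqrt_lem_1. nra. nra. transitivity (a^2 * (t*t)); [ring|]. rewrite Htt. unfold u. ring. }
  rewrite Hs.
  assert (HX : (a * x - - a * t) / (2 * a) = (x + t) / 2) by (field; lra).
  assert (HY : y + d * (a * x - - a * t) / (a * c) = y + 2 * (d / c) * ((x + t) / 2))
    by (field; lra).
  rewrite HX, HY.
  assert (Hyt : y = - (t*t + 3*x^2) / 12) by (rewrite Htt; unfold u; field).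
  split; [|split].
  - rewrite Hyt. nra.
  - rewrite Hyt. assert ((t - 3*x)*(t-3*x) > 0) by nra. nra.
  - lra.
Qed.
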